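(* Let $\alpha\in[0,1)$, let $q_\alpha\in\mathcal{P}\big((1+\alpha)/2\big)$, and let $g:[0,1)\to\mathbb{R}$ be continuously differentiable with $g(0)=0$ and $g'(0)\neq0$. Then for every $\epsilon>0$ there exists $\delta>0$ such that for every $r\in(1-\delta,1)$, $$r\int_0^r (g'(x))^2\,dx \;\ge\; r\int_0^r q_\alpha(x)\,g^2(x)\,dx+\left(\frac{1+\alpha}{2}-\epsilon\right)g^2(r).$$
   Context: For $\gamma\ge 0$, $\mathcal{P}(\gamma)$ is the class of continuous functions $q:[0,1)\to\mathbb{R}$ such that (a) $q(r)\ge0$ for all $r\in[0,1)$, and (b) the solution $y$ of $y''+qy=0$, $y(0)=0$, $y'(0)=1$, is positive on $(0,1)$ and satisfies $\lim_{x\to1^-} \frac{y'(x)}{y(x)}\ge\gamma$. *)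

(* Defs.v *)
From Stdlib Require Import Reals.
From Coquelicot Require Import Coquelicot.
Open Scope R_scope.

Definition I01 (x : R) : Prop := 0 <= x < 1.

Definition is_derive_I01 (f : R -> R) (x l : R) : Prop :=
  filterdiff f (within I01 (locally x)) (fun h => scal h l).

Definition continuous_I01 (f : R -> R) : Prop :=
  forall x, I01 x -> filterlim f (within I01 (locally x)) (locally (f x)).

Definition ivp_solution (q y dy : R -> R) : Prop :=
  y 0 = 0 /\ dy 0 = 1 /\
  (forall x, I01 x -> is_derive_I01 y x (dy x)) /\
  (forall x, I01 x -> is_derive_I01 dy x (- (q x * y x))).

Definition classP (gamma : R) (q : R -> R) : Prop :=
  continuous_I01 q /\
  (forall r, I01 r -> 0 <= q r) /\
  exists y dy : R -> R,
    ivp_solution q y dy /\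
    (forall x, 0 < x < 1 -> 0 < y x) /\
    exists l : Rbar,
      filterlim (fun x => dy x / y x) (at_left 1) (Rbar_locally l) /\
      Rbar_le (Finite gamma) l.

(* Main.v *)
Require Import Defs.
From Stdlib Require Import Reals.
From Coquelicot Require Import Coquelicot.
From Stdlib Require Import Lra.
Open Scope R_scope.

Lemma ball_R (x e y : R) : ball x e y <-> Rabs (y - x) < e.
Proof. reflexivity. Qed.

Lemma derI01_eps f x l : is_derive_I01 f x l -> forall eps, 0 < eps ->
  exists d, 0 < d /\ forall y, I01 y -> Rabs (y - x) < d ->
   Rabs (f y - f x - (y - x) * l) <= eps * Rabs (y - x).
Proof.
  intros [_ H] eps He.
  assert (Hl : is_filter_lim (within I01 (locally x)) x).
  { intros P HP. now apply filter_le_within. }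
  specialize (H x Hl (mkposreal eps He)).
  destruct H as [[d Hd] H]. exists d; split; [exact Hd|].
  intros y Iy Hy. specialize (H y Hy Iy). simpl in H.
  exact H.
Qed.

Lemma within_int (D : R -> Prop) x (P : R -> Prop) :
  locally x D -> within D (locally x) P -> locally x P.
Proof.
  intros H1 H2. unfold within in H2.
  generalize (filter_and _ _ H1 H2). apply filter_imp. intros y [a b]. auto.
Qed.

Lemma I01_loc x : 0 < x < 1 -> locally x I01.
Proof.
  intros Hx. assert (He : 0 < Rmin x (1 - x)) by (apply Rmin_pos; lra).
  exists (mkposreal _ He). intros y Hy. rewrite ball_R in Hy. simpl in Hy.
  generalize (Rmin_l x (1-x)) (Rmin_r x (1-x)). unfold I01.
  apply Rabs_def2 in Hy. lra.
Qed.

Lemma der_int f x l : 0 < x < 1 -> is_derive_I01 f x l -> is_derive f x l.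
Proof.
  intros Hx [Hlin H]. split; [exact Hlin|].
  intros x0 Hx0. apply (@is_filter_lim_locally_unique _ R_NormedModule) in Hx0. subst x0.
  assert (Hl : is_filter_lim (within I01 (locally x)) x).
  { intros P HP. now apply filter_le_within. }
  intros eps. apply (within_int I01). now apply I01_loc. now apply H.
Qed.

Lemma der_cont_I01 f x l : is_derive_I01 f x l ->
  filterlim f (within I01 (locally x)) (locally (f x)).
Proof.
  intros H. apply filterlim_locally. intros eps.
  destruct (derI01_eps f x l H 1 Rlt_0_1) as [d [Hd Hy]].
  assert (He : 0 < Rmin d (eps / (Rabs l + 1))).
  { apply Rmin_pos; [lra|]. apply Rdiv_lt_0_compat. apply cond_pos.
    generalize (Rabs_pos l); lra. }
  exists (mkposreal _ He). intros y Hb Iy. rewrite ball_R in Hb |- *. simpl in Hb.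
  generalize (Rmin_l d (eps / (Rabs l + 1))) (Rmin_r d (eps / (Rabs l + 1))). intros h1 h2.
  specialize (Hy y Iy ltac:(lra)).
  assert (Habs: Rabs (f y - f x) <= Rabs (y - x) * (Rabs l + 1)).
  { replace (f y - f x) with ((f y - f x - (y - x) * l) + (y - x) * l) by ring.
    eapply Rle_trans. apply Rabs_triang. rewrite Rabs_mult. nra. }
  assert (Rabs (y - x) * (Rabs l + 1) < eps).
  { assert (0 < Rabs l + 1) by (generalize (Rabs_pos l); lra).
    assert (h3 : Rabs (y - x) < eps / (Rabs l + 1)) by lra.
    apply (Rmult_lt_compat_r (Rabs l + 1)) in h3; auto.
    unfold Rdiv in h3. rewrite Rmult_assoc, Rinv_l in h3 by lra. lra. }
  lra.
Qed.

Lemma clamp_cont f x : 0 <= x < 1 ->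
  filterlim f (within I01 (locally x)) (locally (f x)) ->
  @continuous R_UniformSpace R_UniformSpace (fun z => f (Rmax 0 z)) x.
Proof.
  intros Hx H P HP. rewrite Rmax_right in HP by lra. specialize (H P HP). destruct H as [[e He] H].
  assert (Hd : 0 < Rmin e (1 - x)) by (apply Rmin_pos; lra).
  exists (mkposreal _ Hd). intros y Hy. rewrite ball_R in Hy. simpl in Hy.
  generalize (Rmin_l e (1-x)) (Rmin_r e (1-x)). intros h1 h2.
  apply Rabs_def2 in Hy.
  apply H.
  - rewrite ball_R. simpl. unfold Rmax; destruct (Rle_dec 0 y); apply Rabs_def1; lra.
  - unfold I01, Rmax; destruct (Rle_dec 0 y); lra.
Qed.
Lemma cont_mul (f g : R -> R) x : @continuous R_UniformSpace R_UniformSpace f x -> @continuous R_UniformSpace R_UniformSpace g x -> @continuous R_UniformSpace R_UniformSpace (fun z => f z * g z) x.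
Proof. intros. apply (@continuous_mult R_UniformSpace R_AbsRing f g); auto. Qed.
Lemma cont_sub (f g : R -> R) x : @continuous R_UniformSpace R_UniformSpace f x -> @continuous R_UniformSpace R_UniformSpace g x -> @continuous R_UniformSpace R_UniformSpace (fun z => f z - g z) x.
Proof. intros. apply (@continuous_minus R_UniformSpace R_AbsRing R_NormedModule f g); auto. Qed.
Lemma cont_sq (f : R -> R) x : @continuous R_UniformSpace R_UniformSpace f x -> @continuous R_UniformSpace R_UniformSpace (fun z => f z ^ 2) x.
Proof. intros. apply (continuous_ext (fun z => f z * f z)). intros; simpl; ring. now apply cont_mul. Qed.

Lemma clamp_cont' f x : x < 1 ->
  (forall x, I01 x -> filterlim f (within I01 (locally x)) (locally (f x))) ->
  @continuous R_UniformSpace R_UniformSpace (fun z => f (Rmax 0 z)) x.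
Proof.
  intros Hx H. destruct (Rle_lt_dec 0 x) as [h|h].
  - apply clamp_cont. lra. apply H. unfold I01; lra.
  - intros P HP. rewrite Rmax_left in HP by lra.
    apply locally_singleton in HP.
    assert (Hd : 0 < - x) by lra.
    exists (mkposreal _ Hd). intros y Hy. rewrite ball_R in Hy. simpl in Hy.
    apply Rabs_def2 in Hy. rewrite Rmax_left by lra. exact HP.
Qed.

Lemma RInt_der (h : R -> R) a : a < 1 ->
  (forall z, z < 1 -> @continuous R_UniformSpace R_UniformSpace h z) ->
  is_derive (RInt h 0) a (h a).
Proof.
  intros Ha Hc. apply (is_derive_RInt h (RInt h 0) 0 a); [|now apply Hc].
  assert (Hd : 0 < 1 - a) by lra.
  exists (mkposreal _ Hd). intros b Hb. rewrite ball_R in Hb. simpl in Hb.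
  apply Rabs_def2 in Hb.
  assert (He : ex_RInt h 0 b).
  { apply (ex_RInt_continuous (V:=R_CompleteNormedModule)). intros z Hz. apply Hc.
  generalize (Rmax_l 0 b) (Rmax_r 0 b). intros. unfold Rmax in Hz |- *.
  destruct (Rle_dec 0 b); lra. }
  exact (RInt_correct h 0 b He).
Qed.

Lemma is_derive_eq (f : R -> R) x l l' : is_derive f x l -> l = l' -> is_derive f x l'.
Proof. intros H ->; exact H. Qed.

Lemma phi_der (q y dy g dg : R -> R) a :
  is_derive y a (dy a) -> is_derive dy a (-(q a * y a)) -> is_derive g a (dg a) ->
  y a <> 0 ->
  is_derive (fun t => dy t * g t ^ 2 / y t) a
    (- q a * g a ^ 2 + 2 * (dy a / y a) * g a * dg a - (dy a / y a) ^ 2 * g a ^ 2).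
Proof.
  intros Hy Hdy Hg Hy0.
  assert (H1 : is_derive (fun t => dy t * g t ^ 2) a (-(q a * y a) * g a ^ 2 + dy a * (2 * dg a * g a))).
  { eapply is_derive_eq.
    apply (@is_derive_mult R_AbsRing dy (fun t => g t ^ 2)). exact Hdy.
    apply is_derive_pow. exact Hg. intros; apply Rmult_comm.
    simpl. unfold plus, mult; simpl. ring. }
  eapply is_derive_eq. apply is_derive_div. exact H1. exact Hy. exact Hy0.
  change (((- (q a * y a) * g a ^ 2 + dy a * (2 * dg a * g a)) * y a - dy a * g a ^ 2 * dy a) / y a ^ 2 = - q a * g a ^ 2 + 2 * (dy a / y a) * g a * dg a - (dy a / y a) ^ 2 * g a ^ 2). field. exact Hy0.
Qed.

Lemma abs_le_inv x b : Rabs x <= b -> -b <= x <= b.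
Proof. intros H; destruct (Rcase_abs x) as [h|h]; [rewrite Rabs_left in H|rewrite Rabs_right in H]; lra. Qed.

Lemma phi_small (q y dy g dg : R -> R) : ivp_solution q y dy ->
  is_derive_I01 g 0 (dg 0) -> g 0 = 0 ->
  forall e, 0 < e -> exists d, 0 < d /\ forall a, 0 < a < d ->
    Rabs (dy a * g a ^ 2 / y a) < e.
Proof.
  intros [Hy0 [Hdy0 [Hy Hdy]]] Hg Hg0 e He.
  assert (I0 : I01 0) by (unfold I01; lra).
  destruct (derI01_eps y 0 (dy 0) (Hy 0 I0) (1/2) ltac:(lra)) as [d1 [Hd1 H1]].
  destruct (derI01_eps g 0 (dg 0) Hg 1 ltac:(lra)) as [d2 [Hd2 H2]].
  destruct (derI01_eps dy 0 _ (Hdy 0 I0) 1 ltac:(lra)) as [d3 [Hd3 H3]].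
  set (C := Rabs (dg 0) + 1).
  assert (HC : 0 < C) by (unfold C; generalize (Rabs_pos (dg 0)); lra).
  assert (HC2 : 0 < 4 * C ^ 2) by (apply Rmult_lt_0_compat; [lra| apply pow_lt; lra]).
  set (d4 := e / (4 * C ^ 2)).
  assert (Hd4 : 0 < d4) by (unfold d4; apply Rdiv_lt_0_compat; lra).
  exists (Rmin (Rmin d1 d2) (Rmin (Rmin d3 (1/2)) d4)).
  split. { repeat apply Rmin_pos; lra. }
  intros a [Ha0 Ha].
  generalize (Rmin_l (Rmin d1 d2) (Rmin (Rmin d3 (1/2)) d4)) (Rmin_r (Rmin d1 d2) (Rmin (Rmin d3 (1/2)) d4))
    (Rmin_l d1 d2) (Rmin_r d1 d2) (Rmin_l (Rmin d3 (1/2)) d4) (Rmin_r (Rmin d3 (1/2)) d4)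
    (Rmin_l d3 (1/2)) (Rmin_r d3 (1/2)). intros.
  assert (Ia : I01 a) by (unfold I01; lra).
  assert (Aa : Rabs (a - 0) = a) by (rewrite Rminus_0_r; apply Rabs_right; lra).
  specialize (H1 a Ia ltac:(lra)). specialize (H2 a Ia ltac:(lra)). specialize (H3 a Ia ltac:(lra)).
  rewrite Aa in H1, H2, H3. rewrite Hy0, Hdy0, Rminus_0_r in H1.
  rewrite Hg0, Rminus_0_r in H2. rewrite Hdy0, Hy0, Rminus_0_r in H3.
  apply abs_le_inv in H1. apply abs_le_inv in H2. apply abs_le_inv in H3.
  assert (ya : a / 2 <= y a) by lra.
  assert (gb : - (C*a) <= g a <= C*a).
  { unfold C. generalize (Rabs_pos (dg 0)) (Rle_abs (dg 0)) (Rle_abs (- dg 0)); rewrite Rabs_Ropp; intros; split; nra. }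
  assert (ga : g a ^ 2 <= (C * a) ^ 2) by nra.
  assert (dya : Rabs (dy a) <= 2).
  { apply Rabs_le. nra. }
  set (X := Rabs (dy a) * g a ^ 2).
  assert (X0 : 0 <= X) by (unfold X; apply Rmult_le_pos; [apply Rabs_pos| apply pow2_ge_0]).
  assert (Xle : X <= 2 * (C * a) ^ 2).
  { unfold X. apply Rmult_le_compat; auto using Rabs_pos, pow2_ge_0. }
  assert (Heq : Rabs (dy a * g a ^ 2 / y a) = X / y a).
  { unfold X, Rdiv. rewrite !Rabs_mult, Rabs_inv.
    rewrite (Rabs_right (g a ^ 2)) by (apply Rle_ge, pow2_ge_0).
    rewrite (Rabs_right (y a)) by lra. reflexivity. }
  rewrite Heq.
  assert (X / y a <= X / (a / 2)).
  { unfold Rdiv. apply Rmult_le_compat_l; auto. apply Rinv_le_contravar; lra. }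
  assert (X / (a / 2) <= 4 * C ^ 2 * a).
  { apply (Rmult_le_reg_r (a / 2)). lra. unfold Rdiv at 1. rewrite Rmult_assoc, Rinv_l by lra. nra. }
  assert (4 * C ^ 2 * a < e).
  { assert (Hz : a < e / (4 * C ^ 2)) by (fold d4; lra).
    apply (Rmult_lt_compat_l (4 * C ^ 2)) in Hz; auto.
    replace (4 * C ^ 2 * (e / (4 * C ^ 2))) with e in Hz by (field; lra). lra. }
  lra.
Qed.

Lemma core (q g dg y dy : R -> R) :
  continuous_I01 q -> (forall x, I01 x -> is_derive_I01 g x (dg x)) ->
  continuous_I01 dg -> g 0 = 0 -> ivp_solution q y dy ->
  (forall x, 0 < x < 1 -> 0 < y x) ->
  forall r, 0 < r < 1 ->
  RInt (fun x => (dg x) ^ 2) 0 r - RInt (fun x => q x * (g x) ^ 2) 0 r >=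
  dy r * (g r) ^ 2 / y r.
Proof.
  intros Hq Hg Hdg Hg0 Hivp Hypos r Hr.
  set (D2 := fun z => dg (Rmax 0 z) ^ 2).
  set (QG := fun z => q (Rmax 0 z) * g (Rmax 0 z) ^ 2).
  assert (Hgc : forall x, I01 x -> filterlim g (within I01 (locally x)) (locally (g x))).
  { intros x Hx. apply (der_cont_I01 g x (dg x)). now apply Hg. }
  assert (Hc1 : forall z, z < 1 -> @continuous R_UniformSpace R_UniformSpace D2 z).
  { intros z Hz. apply cont_sq. now apply clamp_cont'. }
  assert (Hc2 : forall z, z < 1 -> @continuous R_UniformSpace R_UniformSpace QG z).
  { intros z Hz. apply cont_mul. now apply clamp_cont'. apply cont_sq. now apply clamp_cont'. }
  assert (E1 : RInt (fun x => (dg x) ^ 2) 0 r = RInt D2 0 r).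
  { apply RInt_ext. intros x Hx. rewrite Rmin_left, Rmax_right in Hx by lra.
    unfold D2. rewrite Rmax_right by lra. reflexivity. }
  assert (E2 : RInt (fun x => q x * (g x) ^ 2) 0 r = RInt QG 0 r).
  { apply RInt_ext. intros x Hx. rewrite Rmin_left, Rmax_right in Hx by lra.
    unfold QG. rewrite Rmax_right by lra. reflexivity. }
  rewrite E1, E2.
  destruct Hivp as [Hy0 [Hdy0 [Hy Hdy]]] eqn:Hivp'.
  set (K := fun a => RInt D2 0 a - RInt QG 0 a - dy a * g a ^ 2 / y a).
  set (k := fun a => (dg a - dy a / y a * g a) ^ 2).
  assert (HK : forall a, 0 < a < 1 -> is_derive K a (k a)).
  { intros a Ha. assert (Ia : I01 a) by (unfold I01; lra).
    assert (Hya := Hypos a Ha).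
    eapply is_derive_eq.
    apply (@is_derive_minus R_AbsRing R_NormedModule (fun x => RInt D2 0 x - RInt QG 0 x) (fun t => dy t * g t ^ 2 / y t)).
    apply (@is_derive_minus R_AbsRing R_NormedModule (fun x => RInt D2 0 x) (fun x => RInt QG 0 x)).
    apply RInt_der; [lra|exact Hc1].
    apply RInt_der; [lra|exact Hc2].
    apply phi_der. apply der_int; auto. apply der_int; auto. apply der_int; auto. lra.
    unfold k, D2, QG. rewrite Rmax_right by lra. simpl. unfold minus, plus, opp; simpl. field. lra. }
  assert (Hmono : forall a, 0 < a < r -> K a <= K r).
  { intros a Ha.
    destruct (MVT_gen K a r k) as [c [Hc Hc']].
    - intros x Hx. rewrite Rmin_left, Rmax_right in Hx by lra. apply HK. lra.
    - intros x Hx. rewrite Rmin_left, Rmax_right in Hx by lra.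
      apply continuity_pt_filterlim. apply (ex_derive_continuous (K:=R_AbsRing) (V:=R_NormedModule)).
      exists (k x). apply HK. lra.
    - assert (0 <= k c) by (unfold k; apply pow2_ge_0). nra. }
  cut (0 <= K r). { unfold K. lra. }
  destruct (Rle_lt_dec 0 (K r)) as [h|h]; [exact h|exfalso].
  set (e := - K r).
  assert (He : 0 < e / 4) by (unfold e; lra).
  assert (L1 : locally 0 (fun a => ball (RInt D2 0 0) (e/4) (RInt D2 0 a))).
  { apply (proj1 (filterlim_locally (F := locally 0) (RInt D2 0) (RInt D2 0 0))
      (ex_derive_continuous (K:=R_AbsRing) (V:=R_NormedModule) (RInt D2 0) 0
        (ex_intro _ _ (RInt_der D2 0 ltac:(lra) Hc1))) (mkposreal _ He)). }
  assert (L2 : locally 0 (fun a => ball (RInt QG 0 0) (e/4) (RInt QG 0 a))).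
  { apply (proj1 (filterlim_locally (F := locally 0) (RInt QG 0) (RInt QG 0 0))
      (ex_derive_continuous (K:=R_AbsRing) (V:=R_NormedModule) (RInt QG 0) 0
        (ex_intro _ _ (RInt_der QG 0 ltac:(lra) Hc2))) (mkposreal _ He)). }
  rewrite RInt_point in L1, L2.
  destruct L1 as [d1 L1]. destruct L2 as [d2 L2].
  destruct (phi_small q y dy g dg Hivp (Hg 0 ltac:(unfold I01; lra)) Hg0 (e/4) He) as [d3 [Hd3 L3]].
  set (a := Rmin (Rmin d1 d2) (Rmin d3 r) / 2).
  assert (Hapos : 0 < Rmin (Rmin d1 d2) (Rmin d3 r)).
  { repeat apply Rmin_pos; try apply cond_pos; lra. }
  generalize (Rmin_l (Rmin d1 d2) (Rmin d3 r)) (Rmin_r (Rmin d1 d2) (Rmin d3 r))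
    (Rmin_l d1 d2) (Rmin_r d1 d2) (Rmin_l d3 r) (Rmin_r d3 r). intros.
  assert (Ha : 0 < a < r) by (unfold a; lra).
  assert (B1 : Rabs (a - 0) < d1) by (rewrite Rminus_0_r, Rabs_right; unfold a in *; lra).
  assert (B2 : Rabs (a - 0) < d2) by (rewrite Rminus_0_r, Rabs_right; unfold a in *; lra).
  specialize (L1 a B1). specialize (L2 a B2).
  specialize (L3 a ltac:(unfold a in *; lra)).
  rewrite ball_R in L1, L2. simpl in L1, L2. unfold zero in L1, L2; simpl in L1, L2.
  rewrite Rminus_0_r in L1, L2.
  apply Rabs_def2 in L1. apply Rabs_def2 in L2. apply Rabs_def2 in L3.
  specialize (Hmono a Ha). unfold K in Hmono. fold K in Hmono.
  unfold e, K in *. lra.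
Qed.

Theorem lemma3p2 (alpha : R) (q g dg : R -> R) :
  0 <= alpha < 1 ->
  classP ((1 + alpha) / 2) q ->
  (forall x, I01 x -> is_derive_I01 g x (dg x)) ->
  continuous_I01 dg ->
  g 0 = 0 ->
  dg 0 <> 0 ->
  forall eps : R, 0 < eps ->
  exists delta : R, 0 < delta /\
    forall r : R, 1 - delta < r < 1 ->
      r * RInt (fun x => (dg x) ^ 2) 0 r >=
      r * RInt (fun x => q x * (g x) ^ 2) 0 r
        + ((1 + alpha) / 2 - eps) * (g r) ^ 2.
Proof.
  intros Ha Hp Hg Hdg Hg0 _ eps Heps.
  destruct Hp as [Hq [Hqpos [y [dy [Hivp [Hypos [l [Hlim Hle]]]]]]]].
  set (gam := (1 + alpha) / 2) in *.
  assert (Hgam : 0 < gam) by (unfold gam; lra).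
  assert (HP : Rbar_locally l (fun z => gam - eps / 2 < z)).
  { destruct l as [l| |]; simpl in Hle |- *.
    - assert (Hd : 0 < l - (gam - eps / 2)) by lra.
      exists (mkposreal _ Hd). intros z Hz. rewrite ball_R in Hz. simpl in Hz.
      apply Rabs_def2 in Hz. lra.
    - exists (gam - eps / 2). auto.
    - contradiction. }
  destruct (Hlim _ HP) as [d0 H0].
  assert (Hd1 : 0 < eps / (2 * gam)) by (apply Rdiv_lt_0_compat; lra).
  exists (Rmin d0 (Rmin (1/2) (eps / (2 * gam)))).
  split. { repeat apply Rmin_pos; try apply cond_pos; lra. }
  intros r Hr.
  generalize (Rmin_l d0 (Rmin (1/2) (eps / (2 * gam)))) (Rmin_r d0 (Rmin (1/2) (eps / (2 * gam))))
    (Rmin_l (1/2) (eps / (2 * gam))) (Rmin_r (1/2) (eps / (2 * gam))). intros.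
  assert (Hr0 : 0 < r < 1) by lra.
  assert (Hw : gam - eps / 2 < dy r / y r).
  { apply H0. rewrite ball_R. simpl. apply Rabs_def1; lra. lra. }
  assert (Hc := core q g dg y dy Hq Hg Hdg Hg0 Hivp Hypos r Hr0).
  assert (Hyr := Hypos r Hr0).
  replace (dy r * g r ^ 2 / y r) with (dy r / y r * g r ^ 2) in Hc by (field; lra).
  assert (Hg2 : 0 <= g r ^ 2) by apply pow2_ge_0.
  assert (H1r : (1 - r) * gam <= eps / 2).
  { assert (Hz : 1 - r < eps / (2 * gam)) by lra.
    apply (Rmult_lt_compat_r gam) in Hz; auto.
    replace (eps / (2 * gam) * gam) with (eps / 2) in Hz by (field; lra). lra. }
  assert (Hrw : gam - eps <= r * (dy r / y r)) by nra.
  set (A := RInt (fun x => dg x ^ 2) 0 r) in *.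
  set (B := RInt (fun x => q x * g x ^ 2) 0 r) in *.
  set (w := dy r / y r) in *.
  assert (r * (A - B) >= r * (w * g r ^ 2)) by (apply Rle_ge, Rmult_le_compat_l; lra).
  nra.
Qed.
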